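(* Let $\alpha:\mathbb{C}\to\mathbb{C}$ be an exponential automorphism, i.e. a function satisfying $\alpha(z_1+z_2)=\alpha(z_1)+\alpha(z_2)$ and $\alpha(e^z)=e^{\alpha(z)}$ for all $z,z_1,z_2\in\mathbb{C}$. Suppose that either $\alpha(x)\in\mathbb{R}$ for all $x\in\mathbb{R}$, or $\alpha$ is continuous. Then $\alpha(2^{1/k})=2^{1/k}$ for $k=2,3,4$ and $\alpha(\ln 2)=\ln 2$.
   Context: Here $2^{1/k}$ denotes the positive real $k$th root of $2$, and $\ln 2$ the real natural logarithm of $2$. *)

(* Defs.v *)
From Stdlib Require Import Reals.
From Coquelicot Require Import Coquelicot.
Open Scope R_scope.

Definition Cexp (z : C) : C :=
  (exp (Re z) * cos (Im z), exp (Re z) * sin (Im z)).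

Definition exp_automorphism (alpha : C -> C) : Prop :=
  (forall z1 z2 : C, alpha (Cplus z1 z2) = Cplus (alpha z1) (alpha z2)) /\
  (forall z : C, alpha (Cexp z) = Cexp (alpha z)).

(* Main.v *)
Require Import Defs.
From Stdlib Require Import Reals Lra ZArith Lia.
From Coquelicot Require Import Coquelicot.
Open Scope R_scope.

Section Aux.
Variable phi : R -> R.
Hypothesis Hp : forall x y, phi (x + y) = phi x + phi y.

Lemma ph0 : phi 0 = 0.
Proof. pose proof (Hp 0 0) as H. rewrite Rplus_0_r in H. lra. Qed.

Lemma phN x : phi (- x) = - phi x.
Proof. pose proof (Hp x (-x)) as H. rewrite Rplus_opp_r, ph0 in H. lra. Qed.

Lemma phnat n x : phi (INR n * x) = INR n * phi x.
Proof.
  induction n as [|n IH].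
  - simpl. rewrite !Rmult_0_l. apply ph0.
  - rewrite S_INR. replace ((INR n + 1) * x) with (INR n * x + x) by ring.
    rewrite Hp, IH. ring.
Qed.

Lemma phZ m x : phi (IZR m * x) = IZR m * phi x.
Proof.
  destruct m as [|p|p].
  - simpl. rewrite !Rmult_0_l. apply ph0.
  - rewrite <- positive_nat_Z, <- INR_IZR_INZ. apply phnat.
  - rewrite <- Pos2Z.opp_pos, opp_IZR, <- positive_nat_Z, <- INR_IZR_INZ.
    replace (- INR (Pos.to_nat p) * x) with (- (INR (Pos.to_nat p) * x)) by ring.
    rewrite phN, phnat. ring.
Qed.

Lemma ph_inv n : (0 < n)%nat -> phi (/ INR n) = / INR n * phi 1.
Proof.
  intro Hn. assert (Hn' : 0 < INR n) by (apply lt_0_INR; lia).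
  pose proof (phnat n (/ INR n)) as H.
  rewrite Rinv_r in H by lra.
  rewrite H. field. lra.
Qed.

Hypothesis H1 : phi 1 = 0.

Lemma ph_approx t n : (0 < n)%nat ->
  exists s, 0 <= s < / INR n /\ phi t = phi s.
Proof.
  intro Hn. assert (Hn' : 0 < INR n) by (apply lt_0_INR; lia).
  set (m := (up (INR n * t) - 1)%Z).
  destruct (archimed (INR n * t)) as [A B].
  assert (Hm : IZR m = IZR (up (INR n * t)) - 1) by (unfold m; rewrite minus_IZR; reflexivity).
  set (q := IZR m / INR n).
  assert (Hq : phi q = 0).
  { assert (E : INR n * phi q = 0).
    { rewrite <- phnat. unfold q. replace (INR n * (IZR m / INR n)) with (IZR m * 1) by (field; lra).
      rewrite phZ, H1. ring. }
    apply Rmult_integral in E. destruct E; lra. }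
  exists (t - q). split.
  - unfold q. split.
    + apply Rmult_le_reg_l with (INR n); [lra|].
      replace (INR n * (t - IZR m / INR n)) with (INR n * t - IZR m) by (field; lra). lra.
    + apply Rmult_lt_reg_l with (INR n); [lra|].
      replace (INR n * (t - IZR m / INR n)) with (INR n * t - IZR m) by (field; lra).
      rewrite Rinv_r by lra. lra.
  - replace t with (q + (t - q)) at 1 by ring. rewrite Hp, Hq. ring.
Qed.
End Aux.

Lemma small_zero (x : R) : (forall eps, 0 < eps -> Rabs x < eps) -> x = 0.
Proof.
  intro H. destruct (Req_dec x 0) as [|Hx]; auto.
  assert (Ha : 0 < Rabs x) by (apply Rabs_pos_lt; auto).
  specialize (H _ Ha). lra.
Qed.

Theorem mainTheorem5 (alpha : C -> C) :
  exp_automorphism alpha ->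
  ((forall x : R, Im (alpha (RtoC x)) = 0) \/
   (forall z : C, continuous alpha z)) ->
  (forall k : nat, (2 <= k <= 4)%nat ->
     alpha (RtoC (Rpower 2 (/ INR k))) = RtoC (Rpower 2 (/ INR k))) /\
  alpha (RtoC (ln 2)) = RtoC (ln 2).
Proof.
  intros [Hadd Hexp] Hcase.
  set (f := fun x => fst (alpha (RtoC x))).
  set (h := fun x => snd (alpha (RtoC x))).
  assert (HR : forall x y, RtoC (x + y) = Cplus (RtoC x) (RtoC y)).
  { intros. unfold Cplus, RtoC; simpl. f_equal; ring. }
  assert (Hf : forall x y, f (x + y) = f x + f y).
  { intros. unfold f. rewrite HR, Hadd. reflexivity. }
  assert (Hh : forall x y, h (x + y) = h x + h y).
  { intros. unfold h. rewrite HR, Hadd. reflexivity. }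
  assert (Ha : forall x, alpha (RtoC x) = (f x, h x)).
  { intro x. unfold f, h. destruct (alpha (RtoC x)); reflexivity. }
  assert (H0 : alpha (RtoC 0) = (0, 0)).
  { rewrite Ha, (ph0 f Hf), (ph0 h Hh). reflexivity. }
  assert (Hone : alpha (RtoC 1) = (1, 0)).
  { assert (E : RtoC 1 = Cexp (RtoC 0)).
    { unfold Cexp, RtoC; simpl. rewrite exp_0, cos_0, sin_0. f_equal; ring. }
    rewrite E, Hexp. change (RtoC 0) with (RtoC 0). rewrite H0. unfold Cexp; simpl.
    rewrite exp_0, cos_0, sin_0. f_equal; ring. }
  assert (f1 : f 1 = 1) by (unfold f; rewrite Hone; reflexivity).
  assert (h1 : h 1 = 0) by (unfold h; rewrite Hone; reflexivity).
  set (g := fun x => f x - x).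
  assert (Hg : forall x y, g (x + y) = g x + g y).
  { intros. unfold g. rewrite Hf. ring. }
  assert (g1 : g 1 = 0) by (unfold g; rewrite f1; ring).
  assert (Hid : forall t, alpha (RtoC t) = RtoC t).
  { intro t.
    assert (Goal2 : g t = 0 /\ h t = 0).
    { destruct Hcase as [Him | Hcont].
      - assert (hz : forall x, h x = 0) by (intro x; apply (Him x)).
        split; [|apply hz].
        assert (fpos : forall s, 0 <= s -> 0 <= f s).
        { intros s Hs. destruct (Req_dec s 0) as [->|Hs0].
          - rewrite (ph0 f Hf). lra.
          - assert (E : RtoC s = Cexp (RtoC (ln s))).
            { unfold Cexp, RtoC; simpl. rewrite exp_ln by lra. rewrite cos_0, sin_0. f_equal; ring. }
            unfold f. rewrite E, Hexp, Ha. unfold Cexp; simpl. rewrite hz, cos_0.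
            rewrite Rmult_1_r. left. apply exp_pos. }
        apply small_zero. intros eps Heps.
        destruct (archimed_cor1 eps Heps) as [n [Hn1 Hn2]].
        destruct (ph_approx g Hg g1 t n Hn2) as [s [[Hs1 Hs2] Hgs]].
        assert (finv : f (/ INR n) = / INR n).
        { rewrite (ph_inv f Hf n Hn2), f1. ring. }
        assert (A1 := fpos s Hs1).
        assert (A2 := fpos (/ INR n - s) ltac:(lra)).
        replace (f (/ INR n - s)) with (f (/ INR n) - f s) in A2.
        2:{ unfold Rminus. rewrite Hf, (phN f Hf). reflexivity. }
        rewrite Hgs. unfold g. apply Rabs_def1; lra.
      -
        assert (Hc := Hcont (RtoC 0)). unfold continuous in Hc. rewrite H0 in Hc.
        assert (Hsm : forall eps, 0 < eps -> exists n, (0 < n)%nat /\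
                   forall s, 0 <= s < / INR n -> Rabs (f s) < eps /\ Rabs (h s) < eps).
        { intros eps Heps.
          destruct (proj1 (filterlim_locally _ _) Hc (mkposreal eps Heps)) as [d Hd].
          destruct (archimed_cor1 d (cond_pos d)) as [n [Hn1 Hn2]].
          exists n. split; auto. intros s Hs.
          assert (B : ball (RtoC 0) d (RtoC s)).
          { split; simpl; change (Rabs (s - 0) < d) || change (Rabs (0 - 0) < d);
              rewrite ?Rminus_0_r, ?Rminus_diag; try rewrite Rabs_R0; try rewrite Rabs_right; try lra;
              apply cond_pos. }
          specialize (Hd _ B). rewrite Ha in Hd. destruct Hd as [D1 D2]. simpl in D1, D2.
          change (Rabs (f s - 0) < eps) in D1. change (Rabs (h s - 0) < eps) in D2.
          rewrite Rminus_0_r in D1, D2. auto. }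
        split; apply small_zero; intros eps Heps.
        + destruct (Hsm (eps/2) ltac:(lra)) as [n [Hn Hs]].
          destruct (archimed_cor1 (eps/2) ltac:(lra)) as [N [HN1 HN2]].
          destruct (ph_approx g Hg g1 t (n + N) ltac:(lia)) as [s [[Hs1 Hs2] Hgs]].
          assert (Hle : / INR (n + N) <= / INR n).
          { apply Rinv_le_contravar. apply lt_0_INR; lia. apply le_INR; lia. }
          assert (Hle2 : / INR (n + N) <= / INR N).
          { apply Rinv_le_contravar. apply lt_0_INR; lia. apply le_INR; lia. }
          destruct (Hs s ltac:(lra)) as [Hfs _].
          rewrite Hgs. unfold g.
          apply Rle_lt_trans with (Rabs (f s) + Rabs s).
          { unfold Rminus. eapply Rle_trans. apply Rabs_triang. rewrite Rabs_Ropp. lra. }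
          rewrite (Rabs_right s) by lra. lra.
        + destruct (Hsm eps Heps) as [n [Hn Hs]].
          destruct (ph_approx h Hh h1 t n Hn) as [s [Hs1 Hgs]].
          rewrite Hgs. apply Hs; auto. }
    destruct Goal2 as [G1 G2]. rewrite Ha. unfold g in G1. unfold RtoC. f_equal; lra. }
  split; [intros; apply Hid | apply Hid].
Qed.
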